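(* Let $0\le p\le q$ be integers and $\ell\ge0$ an integer. Then $$\nu(\ell,[p]\times[q])=\begin{cases}0,&\ell\le p,\\ \ell-p,&p<\ell\le q,\\ 2\ell-p-q,& q<\ell\le p+q,\\ \ell,&\ell>p+q.\end{cases}$$
   Context: Let $c_1,c_2,\dots$ and $s_1,s_2,\dots$ be distinct vertices. $[i]\times[j]$ denotes the set of pairs $\{c_as_b:1\le a\le i,1\le b\le j\}$. For a set $Q$ of pairs $c_as_b$, $\nu(\ell,Q)$ is the matching number of the bipartite graph with sides $\{c_1,\dots,c_\ell\}$, $\{s_1,\dots,s_\ell\}$ and edge set $([\ell]\times[\ell])\setminus Q$. *)

(* Defs.v *)
From mathcomp Require Import all_boot.
Set Implicit Arguments. Unset Strict Implicit. Unset Printing Implicit Defensive.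

(* A set Q of pairs c_a s_b (a, b >= 1) is encoded as a relation on nat:
   Q a b  <->  c_a s_b \in Q  (1-based indices, as in the paper). *)

Definition rect (i j : nat) : rel nat :=
  fun a b => (1 <= a <= i) && (1 <= b <= j).

(* Bipartite graph with sides {c_1..c_l}, {s_1..s_l}; the vertex c_(a+1)
   (resp. s_(b+1)) is represented by a : 'I_l (resp. b : 'I_l).
   Edge set ([l] x [l]) \ Q. *)
Definition edgeQ (l : nat) (Q : rel nat) (e : 'I_l * 'I_l) : bool :=
  ~~ Q e.1.+1 e.2.+1.

Definition is_matching (l : nat) (Q : rel nat) (M : {set 'I_l * 'I_l}) : bool :=
  [forall e in M, edgeQ Q e] &&
  [forall e in M, forall f in M,
     ((e.1 == f.1) || (e.2 == f.2)) ==> (e == f)].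

Definition nu (l : nat) (Q : rel nat) : nat :=
  \max_(M : {set 'I_l * 'I_l} | is_matching Q M) #|M|.

(* Main.v *)
Require Import Defs.
From mathcomp Require Import all_boot zify.

Lemma card_val_pred l (P : pred nat) :
  #|[set a : 'I_l | P (val a)]| = count P (iota 0 l).
Proof.
rewrite cardsE cardE /enum_mem -enumT /=.
rewrite size_filter -val_enum_ord count_map; apply: eq_count => a //.
Qed.

Lemma count_two l p k :
  count (fun i => (p <= i) || (i < k)) (iota 0 l) = minn l k + (l - maxn p k).
Proof.
elim: l => [|l IH]; first by rewrite /= min0n.
rewrite -addn1 iotaD count_cat IH /= addn0.
case: (leqP p l) => h1; case: (ltnP l k) => h2 /=; lia.
Qed.

Lemma upper l p q (M : {set 'I_l * 'I_l}) :
  is_matching (rect p q) M -> #|M| <= minn l ((l - p) + (l - q)).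
Proof.
case/andP => /forallP He /forallP Hd.
have inj1 : {in M &, injective (fun e : 'I_l * 'I_l => e.1)}.
  move=> e f eM fM h; apply/eqP.
  by have := implyP (forall_inP (implyP (Hd e) eM) f fM); rewrite h eqxx; apply.
have inj2 : {in M &, injective (fun e : 'I_l * 'I_l => e.2)}.
  move=> e f eM fM h; apply/eqP.
  by have := implyP (forall_inP (implyP (Hd e) eM) f fM); rewrite h eqxx orbT; apply.
rewrite leq_min; apply/andP; split.
  rewrite -(card_in_imset inj1); apply: leq_trans (max_card _) _.
  by rewrite card_ord.
set M1 := [set e in M | p <= e.1]; set M2 := [set e in M | q <= e.2].
have sub : M \subset M1 :|: M2.
  apply/subsetP => e eM; rewrite !inE eM /=.
  have := implyP (He e) eM; rewrite /edgeQ /rect /=.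
  by case: (leqP p e.1) => //= _; case: (leqP q e.2).
apply: leq_trans (subset_leq_card sub) _.
apply: leq_trans (leq_card_setU _ _) _.
apply: leq_add.
  have i1 : {in M1 &, injective (fun e : 'I_l * 'I_l => e.1)}.
    by move=> e f; rewrite !inE => /andP[eM _] /andP[fM _]; apply: inj1.
  rewrite -(card_in_imset i1).
  have : (fun e : 'I_l * 'I_l => e.1) @: M1 \subset [set a : 'I_l | p <= val a].
    by apply/subsetP => a /imsetP[e]; rewrite !inE => /andP[_ h] ->.
  move/subset_leq_card/leq_trans; apply.
  rewrite card_val_pred.
  by rewrite -(@eq_count _ (fun i => (p <= i) || (i < 0))) ?count_two ?minn0 ?maxn0 // => i; rewrite ltn0 orbF.
have i2 : {in M2 &, injective (fun e : 'I_l * 'I_l => e.2)}.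
  by move=> e f; rewrite !inE => /andP[eM _] /andP[fM _]; apply: inj2.
rewrite -(card_in_imset i2).
have : (fun e : 'I_l * 'I_l => e.2) @: M2 \subset [set a : 'I_l | q <= val a].
  by apply/subsetP => a /imsetP[e]; rewrite !inE => /andP[_ h] ->.
move/subset_leq_card/leq_trans; apply.
rewrite card_val_pred.
by rewrite -(@eq_count _ (fun i => (q <= i) || (i < 0))) ?count_two ?minn0 ?maxn0 // => i; rewrite ltn0 orbF.
Qed.

Lemma lower l p q : p <= q ->
  exists2 M : {set 'I_l * 'I_l}, is_matching (rect p q) M &
    minn l ((l - p) + (l - q)) <= #|M|.
Proof.
move=> pq.
case: l => [|l].
  by exists set0; [rewrite /is_matching; apply/andP; split; apply/forall_inP => e; rewrite inE | rewrite min0n].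
pose f (a : 'I_l.+1) : 'I_l.+1 := inord ((a + q) %% l.+1).
have fv a : nat_of_ord (f a) = (a + q) %% l.+1 by rewrite /f inordK //; have := @ltn_pmod (a + q) l.+1 isT; lia.
have finj : injective f.
  move=> a b /(congr1 (@nat_of_ord _)); rewrite !fv => /eqP; rewrite eqn_modDr.
  by rewrite !modn_small // => /eqP h; apply: val_inj.
pose G := [set a : 'I_l.+1 | (p <= a) || (q <= f a)].
exists ((fun a => (a, f a)) @: G).
  apply/andP; split.
    apply/forall_inP => e /imsetP[a]; rewrite inE => h ->.
    rewrite /edgeQ /rect /=; move: h; case: (leqP p a) => //= _ h.
    by rewrite -leqNgt.
  apply/forall_inP => e /imsetP[a _ ->]; apply/forall_inP => e' /imsetP[b _ ->].
  apply/implyP => /= /orP[/eqP -> // | /eqP h]; by rewrite (finj _ _ h).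
rewrite card_imset; last by move=> a b [].
apply: leq_trans (_ : #|[set a : 'I_l.+1 | (p <= val a) || (val a < l.+1 - q)]| <= _).
  rewrite (card_val_pred _ (fun i => (p <= i) || (i < l.+1 - q))) count_two; lia.
apply: subset_leq_card; apply/subsetP => a; rewrite !inE.
case/orP => [-> // | h]; apply/orP; right.
rewrite fv modn_small; [exact: leq_addl | move: h].
by rewrite [\val a]/=; lia.
Qed.

Theorem lemma2 (p q l : nat) :
  p <= q ->
  nu l (rect p q) =
    if l <= p then 0
    else if l <= q then l - p
    else if l <= p + q then 2 * l - p - q
    else l.
Proof.
move=> pq.
have -> : (if l <= p then 0
    else if l <= q then l - p
    else if l <= p + q then 2 * l - p - q
    else l) = minn l ((l - p) + (l - q)).
  case: (leqP l p) => h1; [|case: (leqP l q) => h2; [|case: (leqP l (p+q)) => h3]]; lia.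
apply/eqP; rewrite eqn_leq; apply/andP; split.
  by apply/bigmax_leqP => M; apply: upper.
have [M HM HC] := @lower l p q pq.
apply: leq_trans HC _; exact: leq_bigmax_cond.
Qed.
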